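(* Let $c$ be a prime of the form $2^r\cdot 3+1$ ($r\ge1$), and let $a,b>1$ be integers with $a,b,c$ pairwise coprime and $e_c(b)=3$. Suppose positive integers $z,Y,Z$ with $z\le Z$ and $Y\equiv 4\pmod 6$ satisfy $a+b=c^z$ and $a+b^Y=c^Z$, and let $e=\nu_c((Y-1)/3)$. Then $Z\ge 2z-2e$.
   Context: For a positive integer $M$ and an integer $A$ coprime to $M$, $e_M(A)$ denotes the least positive integer $e$ such that $A^e\equiv \pm1\pmod M$. $\nu_c$ is the $c$-adic valuation. *)

(* Defs.v *)
From mathcomp Require Import all_boot.
Set Implicit Arguments. Unset Strict Implicit. Unset Printing Implicit Defensive.

(* A^e = +1 or -1 modulo M, for natural numbers (M %| A^e + 1 encodes A^e = -1 mod M). *)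
Definition pm1_mod (M A e : nat) : Prop :=
  A ^ e = 1 %[mod M] \/ M %| A ^ e + 1.

Definition e_mod (M A e : nat) : Prop :=
  0 < e /\ pm1_mod M A e /\ (forall k, 0 < k -> k < e -> ~ pm1_mod M A k).

(* Main.v *)
Require Import Defs.
From mathcomp Require Import all_boot.
From mathcomp Require Import zify.
Set Warnings "-notation-overridden".
From Stdlib Require Import Lia.
Set Implicit Arguments. Unset Strict Implicit. Unset Printing Implicit Defensive.

Lemma pow_mod2 p t i : (1 + p * t) ^ i = 1 + i * p * t %[mod p ^ 2].
Proof.
elim: i => [|i IH]; first by rewrite expn0 mul0n addn0.
rewrite expnS mulnC -modnMml IH modnMml.
have -> : (1 + i * p * t) * (1 + p * t) = (i * t * t) * p ^ 2 + (1 + i.+1 * p * t).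
  rewrite expnS expn1 mulSn. lia.
by rewrite modnMDl.
Qed.

Lemma sum_mod2 p t n : \sum_(i < n) (1 + p * t) ^ i = n + p * t * 'C(n, 2) %[mod p ^ 2].
Proof.
elim: n => [|n IH].
 by rewrite big_ord0 bin0n /= muln0.
rewrite big_ord_recr /= -modnDml IH modnDml -modnDmr pow_mod2 modnDmr.
congr (_ %% _). rewrite binS bin1. lia.
Qed.

Lemma logn_p1 p q : prime p -> logn p (p * (q * p + 1)) = 1.
Proof.
move=> pp. rewrite lognM ?addn1 ?(prime_gt0 pp) //.
rewrite (logn_prime p pp) eqxx logn_coprime //.
rewrite prime_coprime // -addn1 (dvdn_addr 1 (dvdn_mull q (dvdnn p))) dvdn1.
by case: eqP pp => // ->.
Qed.

Lemma logn_sum_p p E : prime p -> odd p -> 0 < E -> p %| E.-1 ->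
  logn p (\sum_(i < p) E ^ i) = 1.
Proof.
move=> pp op E0 dE.
set t := E.-1 %/ p.
have hE : E = 1 + p * t by rewrite /t mulnC divnK //; lia.
have p1 := prime_gt1 pp.
have hm : (\sum_(i < p) E ^ i) %% p ^ 2 = p.
  rewrite hE sum_mod2 bin2odd //.
  have -> : p + p * t * (p * (p.-1)./2) = t * (p.-1)./2 * p ^ 2 + p.
    rewrite expnS expn1. lia.
  rewrite modnMDl modn_small //. rewrite expnS expn1. nia.
rewrite (divn_eq (\sum_(i < p) E ^ i) (p ^ 2)) hm.
have -> : (\sum_(i < p) E ^ i) %/ p ^ 2 * p ^ 2 + p = p * ((\sum_(i < p) E ^ i) %/ p ^ 2 * p + 1).
  rewrite expnS expn1. lia.
exact: logn_p1.
Qed.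

Lemma lte p C n : prime p -> odd p -> 1 < C -> p %| C.-1 -> 0 < n ->
  logn p (C ^ n).-1 = logn p C.-1 + logn p n.
Proof.
move=> pp op C1 dC; elim/ltn_ind: n => n IH n0.
have p1 := prime_gt1 pp.
have p0 := prime_gt0 pp.
have [pn | npn] := boolP (p %| n).
  set n' := n %/ p.
  have hn : n = n' * p by rewrite /n' divnK.
  have n'0 : 0 < n' by move: n0; rewrite hn; case: (n').
  have n'lt : n' < n by rewrite hn; nia.
  set E := C ^ n'.
  have E1 : 1 < E by rewrite /E; apply: (leq_trans C1); rewrite -{1}(expn1 C) leq_pexp2l //; lia.
  have dE : p %| E.-1 by apply: (dvdn_trans dC); apply: dvdn_pred_predX.
  have hs := @logn_sum_p p E pp op (ltnW E1) dE.
  have s0 : 0 < \sum_(i < p) E ^ i.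
    by rewrite lt0n; apply/negP => /eqP h; rewrite h logn0 in hs.
  rewrite hn expnM -/E predn_exp lognM //; last by lia.
  rewrite hs IH // (lognM _ n'0 p0) (logn_prime p pp) eqxx.
  by rewrite addnA.
set t := C.-1 %/ p.
have hC : C = 1 + p * t by rewrite /t mulnC divnK //; lia.
have d2 : p %| p ^ 2 by rewrite expnS dvdn_mulr.
have hs : (\sum_(i < n) C ^ i) %% p = n %% p.
  rewrite -(modn_dvdm _ d2) hC sum_mod2 (modn_dvdm _ d2) -mulnA addnC mulnC.
  by rewrite modnMDl.
have nps : ~~ (p %| \sum_(i < n) C ^ i) by rewrite /dvdn hs.
have s0 : 0 < \sum_(i < n) C ^ i.
  by rewrite lt0n; apply: contra nps => /eqP ->; rewrite dvdn0.
rewrite predn_exp lognM //; last by lia.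
by rewrite (logn_coprime (m:=n)) ?(logn_coprime (m:=\sum_(i < n) C ^ i)) ?prime_coprime.
Qed.
Lemma final_ineq b X W : 2 <= b -> b * b * (b * b) < X -> 7 * X <= W * W -> W <= 1 + b + b * b -> False.
Proof.
move=> b2 h1 h2 h3.
have h4 : W * W <= (1 + b + b * b) * (1 + b + b * b) by apply: leq_mul.
nia.
Qed.

Theorem mainTheorem10 (c r a b z Y Z : nat) :
  prime c -> 1 <= r -> c = 2 ^ r * 3 + 1 ->
  1 < a -> 1 < b ->
  coprime a b -> coprime a c -> coprime b c ->
  e_mod c b 3 ->
  0 < z -> 0 < Y -> 0 < Z -> z <= Z ->
  Y %% 6 = 4 ->
  a + b = c ^ z -> a + b ^ Y = c ^ Z ->
  2 * z - 2 * logn c ((Y - 1) %/ 3) <= Z.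
Proof.
move=> pc r1 hc a1 b1 cab cac cbc [_ [pm3 nopm]] z0 Y0 Z0 zZ hY h1 h2.
have c1 := prime_gt1 pc.
have c0 := prime_gt0 pc.
have r2 : 2 <= 2 ^ r by rewrite -{1}(expn1 2) leq_pexp2l.
have c7 : 7 <= c by lia.
have r2e : 2 ^ r = 2 * 2 ^ (r - 1) by rewrite -expnS; congr (_ ^ _); lia.
have oc2 : c %% 2 = 1 by lia.
have oc : odd c by move: oc2; rewrite modn2; case: (odd c).
set m := (Y - 1) %/ 3.
have hm : Y - 1 = 3 * m by rewrite /m; lia.
have m0 : 0 < m by rewrite /m; lia.
have [k hk] : exists k, m = 2 * k + 1 by exists (m %/ 2); rewrite /m; lia.
have Y4 : 4 <= Y by lia.
have Y1 : 1 <= Y - 1 by lia.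
have bY : b ^ Y = b * b ^ (Y - 1) by rewrite -expnS; congr (_ ^ _); lia.
have bY1 : 1 <= b ^ (Y - 1) by rewrite expn_gt0; lia.
have hdiv : c ^ z %| (b ^ (Y - 1)).-1.
  have h3 : c ^ Z - c ^ z = b * (b ^ (Y - 1)).-1 by rewrite -subn1 mulnBr muln1 -bY; lia.
  have : c ^ z %| c ^ Z - c ^ z by apply: dvdn_sub; [apply: dvdn_exp2l | ].
  by rewrite h3 Gauss_dvdr // coprimeXl // coprime_sym.
have cdiv : c %| (b ^ (Y - 1)).-1.
  by apply: dvdn_trans hdiv; rewrite -{1}(expn1 c) dvdn_exp2l.
have b6 : b ^ 6 = 1 %[mod c].
  case: pm3 => [h | h].
    by rewrite (_ : 6 = 3 * 2) // expnM -modnXm h modnXm exp1n.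
  apply/eqP; rewrite eqn_mod_dvd; last by rewrite expn_gt0; lia.
  have -> : b ^ 6 - 1 = (b ^ 3 + 1) * (b ^ 3 - 1).
    rewrite (_ : 6 = 3 + 3) // expnD mulnBr muln1 mulnDl mul1n. lia.
  exact: dvdn_mulr.
have b3 : c %| (b ^ 3).-1.
  have e1 : b ^ (Y - 1) = 1 %[mod c].
    by apply/eqP; rewrite eqn_mod_dvd // subn1.
  have e2 : b ^ (Y - 1) = b ^ 3 %[mod c].
    rewrite hm hk (_ : 3 * (2 * k + 1) = 6 * k + 3); last by lia.
    by rewrite expnD expnM -modnMml -modnXm b6 modnXm exp1n modnMml mul1n.
  rewrite -subn1 -eqn_mod_dvd; last by rewrite expn_gt0; lia.
  by rewrite -e2 e1.
have B1 : 1 < b ^ 3 := leq_trans b1 (@leq_pexp2l b 1 3 (ltnW b1) isT).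
have hl := @lte c (b ^ 3) m pc oc B1 b3 m0.
rewrite -expnM -hm in hl.
have bpos : 0 < (b ^ (Y - 1)).-1.
  have hb : b <= b ^ (Y - 1) by rewrite -{1}(expn1 b) leq_pexp2l // ?(ltnW b1).
  by rewrite -subn1 subn_gt0; exact: leq_trans b1 hb.
have zle : z <= logn c (b ^ 3).-1 + logn c m by rewrite -hl -pfactor_dvdn.
set d := logn c (b ^ 3).-1 in zle.
have cd : c ^ d %| 1 + b + b * b.
  have := pfactor_dvdnn c (b ^ 3).-1; rewrite -/d predn_exp.
  rewrite !big_ord_recr big_ord0 /= Gauss_dvdr.
    by rewrite expn0 expn1 add0n.
  apply: coprimeXl; rewrite prime_coprime //; apply/negP => hb.
  apply: (nopm 1) => //; left; apply/eqP; rewrite expn1 eqn_mod_dvd; last exact: ltnW b1.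
  by rewrite subn1.
have cdle : c ^ d <= 1 + b + b * b by apply: dvdn_leq; rewrite // -addnA add1n.
rewrite -/m; apply/negP => /negP; rewrite -ltnNge => hZ.
have hZd : Z.+1 <= d * 2 by clear -zle hZ; lia.
have hcp : c ^ Z.+1 <= (c ^ d) ^ 2 by rewrite -expnM leq_pexp2l.
have bY4 : b ^ 4 <= b ^ Y by rewrite leq_pexp2l // ltnW.
have hb4 : b ^ 4 = b * b * (b * b) by rewrite !expnS expn0 muln1 !mulnA.
apply: (@final_ineq b (c ^ Z) (c ^ d)) => //.
  rewrite -hb4 -h2. apply: leq_ltn_trans bY4 _. rewrite -{1}(add0n (b ^ Y)) ltn_add2r. exact: ltnW a1.
rewrite (_ : (c ^ d) ^ 2 = c ^ d * c ^ d) in hcp; last by rewrite expnS expn1.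
apply: leq_trans _ hcp. rewrite expnS leq_mul2r. by rewrite c7 orbT.
Qed.
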